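(* Assume that $K$ is w-simple, that $\langle S|$ and the inhomogeneities are such that the covectors $\langle h_1,\dots,h_N|$, $(h_1,\dots,h_N)\in\{0,\dots,n-1\}^N$, form a basis of the dual of $\mathcal H$, and let $\mathbb B^{(K)}(\lambda)$ be the operator, diagonal in this basis, defined by $\langle h_1,\dots,h_N|\mathbb B^{(K)}(\lambda)=b_{h_1,\dots,h_N}(\lambda)\langle h_1,\dots,h_N|$ with $b_{h_1,\dots,h_N}(\lambda)=\prod_{a=1}^N(\lambda-\xi_a)^{n-1-h_a}(\lambda-\xi_a+\eta)^{h_a}$. Let $t_1(\lambda)$ be any eigenvalue of $T^{(K)}_1(\lambda)$ and let $\varphi_t(\lambda)=\prod_{a=1}^{\mathsf M}(\lambda-\lambda_a)$, with $\mathsf M\le N$ and $\lambda_a\ne\xi_b$ for all $a,b$, be the polynomial satisfying with $t_0\equiv 1,t_1,\dots,t_n$ the quantum spectral curve equation $\sum_{b=0}^n\alpha_b(\lambda)\varphi_t(\lambda-b\eta)t_{n-b}(\lambda-b\eta)=0$ with $\bar\alpha=\mathsf k_1$. Then the eigenvector of $T^{(K)}_1(\lambda)$ associated with $t_1(\lambda)$ is (up to normalization) $$|t\rangle=\prod_{a=1}^{\mathsf M}\mathbb B^{(K)}(\lambda_a)\,|t_0\rangle .$$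
   Context: Fix integers $n\ge 2$, $N\ge1$, $\eta\in\mathbb C$ and generic inhomogeneities $\xi_1,\dots,\xi_N$. Let $\mathcal H=\bigotimes_{l=1}^N\mathbb C^n$, $R_{a,b}(\lambda)=\lambda I+\eta\,\mathbb P_{a,b}$ ($\mathbb P$ the permutation), $M^{(K)}_a(\lambda)=K_aR_{a,N}(\lambda-\xi_N)\cdots R_{a,1}(\lambda-\xi_1)$, and fused transfer matrices $T^{(K)}_m(\lambda)=\mathrm{tr}_{1,\dots,m}[P^-_{1,\dots,m}M_1^{(K)}(\lambda)\cdots M_m^{(K)}(\lambda-(m-1)\eta)]$ with $P^-_{1,\dots,m}=\frac1{m!}\sum_{\pi\in S_m}\mathrm{sgn}(\pi)P_\pi$. Set $T_m^{(K,\infty)}=\mathrm{tr}_{1,\dots,m}[P^-_{1,\dots,m}K_1\cdots K_m]$, $g_a^{(m)}(\lambda)=\prod_{b\ne a}\frac{\lambda-\xi_b}{\xi_a-\xi_b}\prod_{b=1}^N\prod_{r=1}^{m-1}\frac1{\xi_a-\xi_b-r\eta}$. Given an eigenvalue $t_1$ of $T_1^{(K)}$ (a function with $T_1^{(K)}(\lambda)v=t_1(\lambda)v$ for all $\lambda$, $v\neq0$), set $t_0\equiv1$, $t_n(\lambda)=\mathrm{q\text{-}det}\,M^{(K)}(\lambda)=\det K\prod_{b=1}^N[(\lambda-\xi_b+\eta)\prod_{m=1}^{n-1}(\lambda-\xi_b-m\eta)]$ and, for $m\in\{1,\dots,n-2\}$, $t_{m+1}(\lambda)=\prod_{b=1}^N\prod_{r=1}^m(\lambda-\xi_b-r\eta)[T^{(K,\infty)}_{m+1}\prod_b(\lambda-\xi_b)+\sum_ag_a^{(m+1)}(\lambda)t_1(\xi_a)t_m(\xi_a-\eta)]$.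 Coefficients: $\alpha_0=-1$, $\alpha_1(\lambda)=\bar\alpha\prod_{a=1}^N(\lambda+\eta-\xi_a)$, $\alpha_{1+j}(\lambda)=(-1)^j\prod_{h=0}^j\alpha_1(\lambda-h\eta)$. A matrix is w-simple if each eigenvalue has a one-dimensional eigenspace. Write $K=W_KK_JW_K^{-1}$ with $K_J$ an upper-triangular Jordan form such that $K_Je_1=\mathsf k_1e_1$, $\mathsf k_1\ne0$, $e_1=(1,0,\dots,0)^T$; $|t_0\rangle=(\bigotimes_{a=1}^NW_{K,a})\,e_1^{\otimes N}$. Given a covector $\langle S|$, $\langle h_1,\dots,h_N|=\langle S|\prod_{l=1}^N(T_1^{(K)}(\xi_l))^{h_l}$. *)

(* Defs.v *)
From HB Require Import structures.
From mathcomp Require Import all_boot all_order all_algebra all_fingroup.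
Set Implicit Arguments. Unset Strict Implicit. Unset Printing Implicit Defensive.
Import Order.TTheory GRing.Theory Num.Theory.
Local Open Scope ring_scope.

Section Model.
Variable C : numClosedFieldType.

(* Matrices indexed by an arbitrary finite type T (basis of a tensor product). *)
Definition mkop (T : finType) (f : T -> T -> C) : 'M[C]_#|{: T}| :=
  \matrix_(i, j) f (enum_val i) (enum_val j).
Definition ent (T : finType) (A : 'M[C]_#|{: T}|) (x y : T) : C :=
  A (enum_rank x) (enum_rank y).
Definition mkvec (T : finType) (f : T -> C) : 'cV[C]_#|{: T}| :=
  \col_i f (enum_val i).

Variables (n N : nat).
(* basis labels of H = (C^n)^{(x) N} : configurations 'I_N -> 'I_n *)
Definition cfg := {ffun 'I_N -> 'I_n}.
Definition Hdim := #|{: cfg}|.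
(* auxiliary space (x) H *)
Definition acfg := ('I_n * cfg)%type.

Definition upd (c : cfg) (l : 'I_N) (i : 'I_n) : cfg :=
  [ffun k => if k == l then i else c k].

(* permutation P_{a,l} of auxiliary space a with quantum site l *)
Definition Pal (l : 'I_N) : 'M[C]_#|{: acfg}| :=
  mkop (fun x y : acfg => ((x.1 == y.2 l) && (x.2 == upd y.2 l y.1))%:R).
Definition Ral (eta : C) (l : 'I_N) (mu : C) : 'M[C]_#|{: acfg}| :=
  mu%:M + eta *: Pal l.
Definition Kaux (K : 'M[C]_n) : 'M[C]_#|{: acfg}| :=
  mkop (fun x y : acfg => K x.1 y.1 * (x.2 == y.2)%:R).
Definition Mono (eta : C) (xi : 'I_N -> C) (K : 'M[C]_n) (la : C) : 'M[C]_#|{: acfg}| :=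
  Kaux K *m foldr (fun l A => Ral eta l (la - xi l) *m A) 1%:M (rev (enum 'I_N)).
Definition T1 (eta : C) (xi : 'I_N -> C) (K : 'M[C]_n) (la : C) : 'M[C]_Hdim :=
  mkop (fun c c' : cfg => \sum_(i : 'I_n) ent (Mono eta xi K la) (i, c) (i, c')).

Definition Kten (m : nat) (K : 'M[C]_n) : 'M[C]_#|{: {ffun 'I_m -> 'I_n}}| :=
  mkop (fun c c' : {ffun 'I_m -> 'I_n} => \prod_(k < m) K (c k) (c' k)).
Definition Pperm (m : nat) (s : 'S_m) : 'M[C]_#|{: {ffun 'I_m -> 'I_n}}| :=
  mkop (fun c c' : {ffun 'I_m -> 'I_n} => (c == [ffun k => c' ((s^-1)%g k)])%:R).
Definition Pminus (m : nat) : 'M[C]_#|{: {ffun 'I_m -> 'I_n}}| :=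
  (m`!%:R)^-1 *: \sum_(s : 'S_m) ((-1) ^+ s) *: Pperm s.
Definition Tinf (m : nat) (K : 'M[C]_n) : C := \tr (Pminus m *m Kten m K).

Definition gfun (eta : C) (xi : 'I_N -> C) (m : nat) (a : 'I_N) (la : C) : C :=
  (\prod_(b < N | b != a) ((la - xi b) / (xi a - xi b))) *
  \prod_(b < N) \prod_(1 <= r < m) (xi a - xi b - r%:R * eta)^-1.

Definition qdet (eta : C) (xi : 'I_N -> C) (K : 'M[C]_n) (la : C) : C :=
  \det K * \prod_(b < N) ((la - xi b + eta) * \prod_(1 <= m < n) (la - xi b - m%:R * eta)).

(* t_0 = 1, t_1 given, t_{m+1} (1 <= m <= n-2) by the fusion formula, t_n = q-det *)
Fixpoint tfun (eta : C) (xi : 'I_N -> C) (K : 'M[C]_n) (t1 : C -> C) (m : nat) (la : C)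
  : C :=
  match m with
  | 0 => 1
  | m'.+1 =>
    if m'.+1 == n then qdet eta xi K la
    else if m' == 0%N then t1 la
    else (\prod_(b < N) \prod_(1 <= r < m'.+1) (la - xi b - r%:R * eta)) *
         (Tinf m'.+1 K * \prod_(b < N) (la - xi b) +
          \sum_(a < N) gfun eta xi m'.+1 a la * t1 (xi a) * tfun eta xi K t1 m' (xi a - eta))
  end.

Definition alpha1 (abar eta : C) (xi : 'I_N -> C) (la : C) : C :=
  abar * \prod_(a < N) (la + eta - xi a).
Definition alpha (abar eta : C) (xi : 'I_N -> C) (j : nat) (la : C) : C :=
  match j with
  | 0 => -1
  | j'.+1 => (-1) ^+ j' * \prod_(h < j'.+1) alpha1 abar eta xi (la - h%:R * eta)
  end.

Definition wsimple (K : 'M[C]_n) : Prop :=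
  forall a : C, eigenvalue K a -> \rank (eigenspace K a) = 1%N.

Definition jordan_form (J : 'M[C]_n) : Prop :=
  forall i j : 'I_n,
    [/\ ((j : nat) != i -> (j : nat) != i.+1 -> J i j = 0),
        ((j : nat) = i.+1 -> J i j = 0 \/ J i j = 1) &
        ((j : nat) = i.+1 -> J i j = 1 -> J i i = J j j)].

Definition e1 : 'cV[C]_n := \col_(i < n) ((i : nat) == 0%N)%:R.

Definition tenop (A : 'M[C]_n) : 'M[C]_Hdim :=
  mkop (fun c c' : cfg => \prod_(l < N) A (c l) (c' l)).
Definition tenvec (w : 'cV[C]_n) : 'cV[C]_Hdim :=
  mkvec (fun c : cfg => \prod_(l < N) w (c l) 0).

Definition t0vec (W : 'M[C]_n) : 'cV[C]_Hdim := tenop W *m tenvec e1.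

Definition hcovec (eta : C) (xi : 'I_N -> C) (K : 'M[C]_n) (S : 'rV[C]_Hdim) (h : cfg)
  : 'rV[C]_Hdim :=
  S *m foldr (fun l A => (T1 eta xi K (xi l)) ^+ (h l) *m A) 1%:M (enum 'I_N).

Definition hmatrix (eta : C) (xi : 'I_N -> C) (K : 'M[C]_n) (S : 'rV[C]_Hdim)
  : 'M[C]_Hdim :=
  \matrix_(i, j) hcovec eta xi K S (enum_val i) 0 j.

Definition bfun (eta : C) (xi : 'I_N -> C) (h : cfg) (la : C) : C :=
  \prod_(a < N) ((la - xi a) ^+ (n.-1 - h a) * (la - xi a + eta) ^+ (h a)).

Definition tvec (B : C -> 'M[C]_Hdim) (lam : seq C) (v0 : 'cV[C]_Hdim) : 'cV[C]_Hdim :=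
  foldr (fun x v => B x *m v) v0 lam.
End Model.

(* Main.v *)
Require Import Defs.
From HB Require Import structures.
From mathcomp Require Import all_boot all_order all_algebra all_fingroup.
From mathcomp Require Import ring zify.
From Stdlib Require Import Lia.
Import Order.TTheory GRing.Theory Num.Theory.
Set Implicit Arguments. Unset Strict Implicit. Unset Printing Implicit Defensive.
Local Open Scope ring_scope.

Section PF.
Variable C : numClosedFieldType.

Definition pf (f : C -> C) := exists p : {poly C}, forall x, f x = p.[x].

Lemma pf_ext f g : pf f -> (forall x, f x = g x) -> pf g.
Proof. by move=> [p Hp] E; exists p => x; rewrite -E. Qed.

Lemma pf_cst c : pf (fun _ => c).
Proof. by exists c%:P => x; rewrite hornerC. Qed.

Lemma pf_id : pf (fun x => x).
Proof. by exists 'X => x; rewrite hornerX. Qed.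

Lemma pf_add f g : pf f -> pf g -> pf (fun x => f x + g x).
Proof. by move=> [p Hp] [q Hq]; exists (p + q) => x; rewrite hornerD Hp Hq. Qed.

Lemma pf_mul f g : pf f -> pf g -> pf (fun x => f x * g x).
Proof. by move=> [p Hp] [q Hq]; exists (p * q) => x; rewrite hornerM Hp Hq. Qed.

Lemma pf_opp f : pf f -> pf (fun x => - f x).
Proof. by move=> [p Hp]; exists (- p) => x; rewrite hornerN Hp. Qed.

Lemma pf_sub f g : pf f -> pf g -> pf (fun x => f x - g x).
Proof. by move=> Hf Hg; apply: pf_add => //; apply: pf_opp. Qed.

Lemma pf_comp f g : pf f -> pf g -> pf (fun x => f (g x)).
Proof.
by move=> [p Hp] [q Hq]; exists (p \Po q) => x; rewrite horner_comp Hp Hq.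
Qed.

Lemma pf_shift f c : pf f -> pf (fun x => f (x - c)).
Proof. by move=> Hf; apply: pf_comp => //; apply: pf_sub; [apply: pf_id|apply: pf_cst]. Qed.

Lemma pf_prod (I : Type) (s : seq I) (P : pred I) (F : I -> C -> C) :
  (forall i, pf (F i)) -> pf (fun x => \prod_(i <- s | P i) F i x).
Proof.
move=> HF; elim: s => [|i s IH].
  by apply: (@pf_ext (fun _ => 1)); [apply: pf_cst | move=> x; rewrite big_nil].
case Pi: (P i).
  by apply: (pf_ext (pf_mul (HF i) IH)) => x; rewrite big_cons Pi.
by apply: (pf_ext IH) => x; rewrite big_cons Pi.
Qed.

Lemma pf_sum (I : Type) (s : seq I) (P : pred I) (F : I -> C -> C) :
  (forall i, pf (F i)) -> pf (fun x => \sum_(i <- s | P i) F i x).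
Proof.
move=> HF; elim: s => [|i s IH].
  by apply: (@pf_ext (fun _ => 0)); [apply: pf_cst | move=> x; rewrite big_nil].
case Pi: (P i).
  by apply: (pf_ext (pf_add (HF i) IH)) => x; rewrite big_cons Pi.
by apply: (pf_ext IH) => x; rewrite big_cons Pi.
Qed.

Lemma poly_allroots (p : {poly C}) : (forall x, p.[x] = 0) -> p = 0.
Proof.
move=> H; apply/eqP; apply/negPn/negP => pn0.
pose rs := [seq (i%:R : C) | i <- iota 0 (size p)].
have H1 : all (root p) rs by apply/allP => x /mapP [i _ ->]; apply/rootP; apply: H.
have H2 : uniq rs.
  rewrite map_inj_uniq ?iota_uniq // => i j /eqP; rewrite eqr_nat => /eqP.
  done.
have := max_poly_roots pn0 H1 H2.
by rewrite size_map size_iota ltnn.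
Qed.

Lemma pf_cancel (d g : C -> C) (pd : {poly C}) :
  pd != 0 -> (forall x, d x = pd.[x]) -> pf g -> (forall x, d x * g x = 0) ->
  forall x, g x = 0.
Proof.
move=> pd0 Hd [pg Hg] H x.
have : pd * pg = 0 by apply: poly_allroots => y; rewrite hornerM -Hd -Hg.
move/eqP; rewrite mulf_eq0 (negbTE pd0) /= => /eqP pg0.
by rewrite Hg pg0 horner0.
Qed.

Definition mpf p q (F : C -> 'M[C]_(p, q)) := forall i j, pf (fun x => F x i j).

Lemma mpf_cst p q (A : 'M[C]_(p, q)) : mpf (fun _ => A).
Proof. by move=> i j; apply: pf_cst. Qed.

Lemma mpf_mul p q r (F : C -> 'M[C]_(p, q)) (G : C -> 'M[C]_(q, r)) :
  mpf F -> mpf G -> mpf (fun x => F x *m G x).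
Proof.
move=> HF HG i j.
have := pf_sum (F := fun k x => F x i k * G x k j) (index_enum 'I_q) xpredT
  (fun k => pf_mul (HF i k) (HG k j)).
by move/pf_ext; apply => x; rewrite mxE.
Qed.

End PF.
Section Gen.
Variable C : numClosedFieldType.

Lemma sum_rank (T : finType) (G : 'I_#|{: T}| -> C) :
  \sum_(k < #|{: T}|) G k = \sum_(y : T) G (enum_rank y).
Proof.
by rewrite (reindex enum_rank) //; apply: onW_bij; apply: enum_rank_bij.
Qed.

Lemma mkvec_rank (T : finType) (f : T -> C) x : (mkvec f) (enum_rank x) 0 = f x.
Proof. by rewrite mxE enum_rankK. Qed.

Lemma eq_mkvec (T : finType) (f g : T -> C) : (forall x, f x = g x) -> mkvec f = mkvec g.
Proof. by move=> E; apply/matrixP => i j; rewrite !mxE E. Qed.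

Lemma mulvec_rank (T : finType) (A : 'M[C]_#|{: T}|) (f : T -> C) x :
  (A *m mkvec f) (enum_rank x) 0 = \sum_y ent A x y * f y.
Proof.
rewrite mxE sum_rank; apply: eq_bigr => y _; by rewrite mkvec_rank.
Qed.

Lemma mkop_mulvec (T : finType) (F : T -> T -> C) (f : T -> C) :
  mkop F *m mkvec f = mkvec (fun x => \sum_y F x y * f y).
Proof.
apply/matrixP => i j; rewrite ord1 -(enum_valK i) mulvec_rank mkvec_rank.
by apply: eq_bigr => y _; rewrite /ent mxE !enum_rankK.
Qed.

Lemma vec_eq (T : finType) (u v : 'cV[C]_#|{: T}|) :
  (forall x, u (enum_rank x) 0 = v (enum_rank x) 0) -> u = v.
Proof.
by move=> E; apply/matrixP => i j; rewrite ord1 -(enum_valK i) E.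
Qed.

Lemma sum_pair (I J : finType) (F : I * J -> C) :
  \sum_(y : I * J) F y = \sum_(i : I) \sum_(j : J) F (i, j).
Proof. by rewrite pair_bigA; apply: eq_bigr => -[]. Qed.

End Gen.

Section Tensor.
Variables (C : numClosedFieldType) (n N : nat).
Local Notation acfg := (acfg n N).
Local Notation cfg := (cfg n N).

Definition pvec (u0 : 'cV[C]_n) (us : 'I_N -> 'cV[C]_n) : 'cV[C]_#|{: acfg}| :=
  mkvec (fun x : acfg => u0 x.1 0 * \prod_l us l (x.2 l) 0).

Lemma pvec_ext u0 u0' us us' : u0 = u0' -> (forall k, us k = us' k) ->
  pvec u0 us = pvec u0' us'.
Proof.
move=> -> E; apply: eq_mkvec => x; congr (_ * _); apply: eq_bigr => l _.
by rewrite E.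
Qed.

Lemma upd_same (c : cfg) l i : upd c l i l = i.
Proof. by rewrite ffunE eqxx. Qed.

Lemma upd_upd2 (c : cfg) l i k : upd (upd c l i) l k = upd c l k.
Proof. by apply/ffunP => j; rewrite !ffunE; case: (j == l). Qed.

Lemma upd_id (c : cfg) l : upd c l (c l) = c.
Proof. by apply/ffunP => j; rewrite !ffunE; case: eqP => // ->. Qed.

Lemma Pal_key (x y : acfg) l :
  (x.1 == y.2 l) && (x.2 == upd y.2 l y.1) = (y == (x.2 l, upd x.2 l x.1)).
Proof.
apply/idP/eqP.
  case/andP => /eqP h1 /eqP h2; case: y h1 h2 => [j c'] /= h1 h2.
  by rewrite h2 upd_same upd_upd2 h1 upd_id.
by move=> -> /=; rewrite upd_same upd_upd2 upd_id !eqxx.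
Qed.

Lemma Pal_pvec l u0 us :
  Pal C n l *m pvec u0 us = pvec (us l) (fun k => if k == l then u0 else us k).
Proof.
rewrite /Pal /pvec mkop_mulvec; apply: eq_mkvec => x /=.
under eq_bigr do rewrite Pal_key.
rewrite (bigD1 (x.2 l, upd x.2 l x.1)) //= eqxx mul1r.
rewrite [X in _ + X]big1 ?addr0; last by move=> y /negbTE ->; rewrite mul0r.
rewrite (bigD1 l) //= [in RHS](bigD1 l) //= upd_same eqxx.
rewrite mulrCA; congr (_ * (_ * _)).
by apply: eq_bigr => k /negbTE kl; rewrite ffunE kl.
Qed.

Lemma Kaux_pvec (K : 'M[C]_n) u0 us :
  Kaux N K *m pvec u0 us = pvec (K *m u0) us.
Proof.
rewrite /Kaux /pvec mkop_mulvec; apply: eq_mkvec => x /=.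
rewrite -(pair_bigA _ (fun (j : 'I_n) (c : cfg) =>
   K x.1 j * (x.2 == c)%:R * (u0 j 0 * \prod_l us l (c l) 0))) /=.
rewrite mxE big_distrl /=; apply: eq_bigr => j _.
rewrite (bigD1 x.2) //= eqxx mulr1 [X in _ + X]big1 ?addr0 ?mulrA //.
by move=> c /negbTE; rewrite eq_sym => ->; rewrite mulr0 mul0r.
Qed.

Lemma Ral_pvec eta l mu u0 us :
  Ral n eta l mu *m pvec u0 us =
  mu *: pvec u0 us + eta *: pvec (us l) (fun k => if k == l then u0 else us k).
Proof. by rewrite /Ral mulmxDl mul_scalar_mx -scalemxAl Pal_pvec. Qed.

Variable (eta : C) (mu : 'I_N -> C) (w : 'cV[C]_n).
Local Notation wf := (fun _ : 'I_N => w).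
Definition wl (l : 'I_N) (u : 'cV[C]_n) := fun k : 'I_N => if k == l then u else w.

Definition Om (s : seq 'I_N) := foldr (fun l A => Ral n eta l (mu l) *m A) 1%:M s.

Lemma Om_w s : Om s *m pvec w wf = (\prod_(l <- s) (mu l + eta)) *: pvec w wf.
Proof.
elim: s => [|l s IH]; first by rewrite /= mul1mx big_nil scale1r.
rewrite /= -mulmxA IH -scalemxAr Ral_pvec big_cons.
rewrite (@pvec_ext w w (fun k => if k == l then w else w) wf) //; last first.
  by move=> k; case: (k == l).
by rewrite -scalerDl scalerA mulrC.
Qed.

Lemma Om_pvec s : uniq s -> exists c : 'I_N -> C,
  (forall l, l \notin s -> c l = 0) /\
  forall u, Om s *m pvec u wf =
     (\prod_(l <- s) mu l) *: pvec u wf + \sum_l c l *: pvec w (wl l u).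
Proof.
elim: s => [|l' s IH].
  move=> _; exists (fun _ => 0); split=> // u.
  by rewrite /= mul1mx big_nil scale1r big1 ?addr0 // => l _; rewrite scale0r.
rewrite cons_uniq => /andP [l's /IH [c [c0 Hc]]].
pose A := \prod_(l <- s) mu l.
exists (fun l => if l == l' then eta * A else c l * (mu l' + eta)); split.
  move=> l; rewrite in_cons negb_or => /andP [/negbTE -> ls].
  by rewrite c0 // mul0r.
move=> u; rewrite /= -mulmxA Hc mulmxDr -scalemxAr Ral_pvec mulmx_sumr.
have E : forall l, Ral n eta l' (mu l') *m (c l *: pvec w (wl l u)) =
                   (c l * (mu l' + eta)) *: pvec w (wl l u).
  move=> l; rewrite -scalemxAr; case: (eqVneq l l') => [->|nl].
    by rewrite c0 // !scale0r mul0r scale0r.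
  rewrite Ral_pvec.
  have -> : pvec (wl l u l') (fun k => if k == l' then w else wl l u k) =
            pvec w (wl l u).
    apply: pvec_ext; first by rewrite /wl eq_sym (negbTE nl).
    move=> k; rewrite /wl; case: (eqVneq k l') => [->|//].
    by rewrite eq_sym (negbTE nl).
  by rewrite -scalerDl scalerA.
rewrite (eq_bigr _ (fun l _ => E l)).
rewrite big_cons -/A [in RHS](bigD1 l') //= eqxx.
rewrite (bigD1 l') //= c0 // mul0r scale0r add0r.
rewrite scalerDr scalerA addrA; congr (_ + _ + _).
  by rewrite mulrC.
  by rewrite scalerA mulrC.
by apply: eq_bigr => l /negbTE ->.
Qed.

End Tensor.

Section T1Eig.
Variables (C : numClosedFieldType) (n N : nat).
Local Notation acfg := (acfg n N).
Local Notation cfg := (cfg n N).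

Lemma pvec_rank (u0 : 'cV[C]_n) (us : 'I_N -> 'cV[C]_n) (x : acfg) :
  (pvec u0 us) (enum_rank x) 0 = u0 x.1 0 * \prod_l us l (x.2 l) 0.
Proof. exact: mkvec_rank. Qed.

Lemma pvecZ a (u0 : 'cV[C]_n) (us : 'I_N -> 'cV[C]_n) : pvec (a *: u0) us = a *: pvec u0 us.
Proof.
apply: vec_eq => x; rewrite [RHS]mxE !pvec_rank.
by rewrite [_ x.1 0]mxE mulrA.
Qed.

Lemma delta_col (i j : 'I_n) : (delta_mx i 0 : 'cV[C]_n) j 0 = (j == i)%:R.
Proof. by rewrite mxE andbT. Qed.

Lemma prod_rev_enum (F : 'I_N -> C) :
  \prod_(l <- rev (enum 'I_N)) F l = \prod_l F l.
Proof. by rewrite big_rev big_enum. Qed.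

Lemma T1_tenvec (eta : C) (xi : 'I_N -> C) (K : 'M[C]_n) (k1 : C) (w : 'cV[C]_n) m :
  (0 < N)%N -> K *m w = k1 *: w ->
  T1 eta xi K (xi m) *m tenvec N w = alpha1 k1 eta xi (xi m) *: tenvec N w.
Proof.
move=> N0 Kw.
pose mu := fun l => xi m - xi l.
have Hu : uniq (rev (enum 'I_N)) by rewrite rev_uniq enum_uniq.
have [c [_ Hc]] := Om_pvec eta mu w Hu.
pose A := \prod_(l <- rev (enum 'I_N)) mu l.
have A0 : A = 0.
  by rewrite /A prod_rev_enum (bigD1 m) //= /mu subrr mul0r.
pose M := Mono eta xi K (xi m).
have HM : forall i, M *m pvec (delta_mx i 0) (fun _ => w) =
   A *: pvec (K *m delta_mx i 0) (fun _ => w) +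
   \sum_l (c l * k1) *: pvec w (wl w l (delta_mx i 0)).
  move=> i; rewrite /M /Mono -mulmxA.
  have -> : foldr (fun l A0 => Ral n eta l (xi m - xi l) *m A0) 1%:M
              (rev (enum 'I_N)) = Om n eta mu (rev (enum 'I_N)) by [].
  rewrite Hc mulmxDr -scalemxAr Kaux_pvec mulmx_sumr; congr (_ + _).
  apply: eq_bigr => l _; rewrite -scalemxAr Kaux_pvec Kw pvecZ.
  by rewrite scalerA.
have Hq : forall c0 : cfg, (T1 eta xi K (xi m) *m tenvec N w) (enum_rank c0) 0 =
    \sum_i (M *m pvec (delta_mx i 0) (fun _ => w)) (enum_rank (i, c0)) 0.
  move=> c0; rewrite /T1 /tenvec mkop_mulvec mkvec_rank.
  under eq_bigr do rewrite big_distrl.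
  rewrite exchange_big /=; apply: eq_bigr => i _.
  rewrite /pvec mulvec_rank.
  rewrite sum_pair /=.
  rewrite (bigD1 i) //= [X in _ + X]big1 ?addr0.
    by apply: eq_bigr => c' _; rewrite delta_col eqxx mul1r.
  move=> j /negbTE jn; rewrite big1 // => c' _.
  by rewrite delta_col jn mul0r mulr0.
pose q := fun c0 : cfg => \prod_l w (c0 l) 0.
have HT : forall c0 : cfg, (T1 eta xi K (xi m) *m tenvec N w) (enum_rank c0) 0 =
    (\sum_l c l * k1) * q c0.
  move=> c0; rewrite Hq.
  under eq_bigr do rewrite HM A0 scale0r add0r summxE.
  rewrite exchange_big big_distrl /=; apply: eq_bigr => l _.
  under eq_bigr do rewrite mxE pvec_rank /=.
  rewrite -big_distrr /=; congr (_ * _).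
  have E : forall i : 'I_n, w i 0 * \prod_k wl w l (delta_mx i 0) k (c0 k) 0 =
      w i 0 * ((c0 l == i)%:R * \prod_(k | k != l) w (c0 k) 0).
    move=> i; rewrite (bigD1 l) //= /wl eqxx delta_col.
    by rewrite (eq_bigr (fun k => w (c0 k) 0)) // => k /negbTE ->.
  rewrite (eq_bigr _ (fun i _ => E i)) (bigD1 (c0 l)) //= eqxx mul1r.
  rewrite [X in _ + X]big1 ?addr0; last first.
    by move=> i /negbTE; rewrite eq_sym => ->; rewrite mul0r mulr0.
  by rewrite /q [RHS](bigD1 l).
have HS : forall c0 : cfg, q c0 != 0 ->
    \sum_l c l = \prod_(l <- rev (enum 'I_N)) (mu l + eta).
  move=> c0 qn0.
  have := Om_w eta mu w (rev (enum 'I_N)); rewrite Hc -/A A0 scale0r add0r.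
  have E : forall l, c l *: pvec w (wl w l w) = c l *: pvec w (fun _ => w).
    by move=> l; congr (_ *: _); apply: pvec_ext => // k; rewrite /wl; case: (k == l).
  rewrite (eq_bigr _ (fun l _ => E l)) -scaler_suml.
  move/matrixP => /(_ (enum_rank (c0 (Ordinal N0), c0)) 0).
  rewrite !mxE !enum_rankK /= => H.
  have wn0 : w (c0 (Ordinal N0)) 0 * q c0 != 0.
    rewrite mulf_neq0 //; apply: contraNneq qn0 => w0.
    by rewrite /q (bigD1 (Ordinal N0)) //= w0 mul0r.
  by apply: (mulIf wn0).
apply: vec_eq => c0; rewrite [RHS]mxE HT.
have [q0|qn0] := eqVneq (q c0) 0.
  by rewrite /tenvec mkvec_rank -/(q c0) q0 !mulr0.
rewrite -big_distrl (HS c0 qn0) /tenvec mkvec_rank -/(q c0); congr (_ * _).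
transitivity ((\prod_l (mu l + eta)) * k1); first by rewrite prod_rev_enum.
rewrite mulrC /alpha1; congr (_ * _).
by apply: eq_bigr => l _; rewrite /mu addrAC.
Qed.

End T1Eig.

Section Misc.
Variables (C : numClosedFieldType) (n N : nat).
Local Notation cfg := (cfg n N).

Lemma tenop_tenvec (W : 'M[C]_n) (e : 'cV[C]_n) :
  tenop N W *m tenvec N e = tenvec N (W *m e).
Proof.
apply: vec_eq => c; rewrite /tenop /tenvec mkop_mulvec !mkvec_rank.
under [RHS]eq_bigr do rewrite mxE.
rewrite bigA_distr_bigA /=; apply: eq_bigr => f _.
by rewrite -big_split.
Qed.

Lemma hcovec_eig eta xi (K : 'M[C]_n) S (x : 'cV[C]_(Hdim n N)) (cc : 'I_N -> C) :
  (forall l, T1 eta xi K (xi l) *m x = cc l *: x) ->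
  forall h : cfg, hcovec eta xi K S h *m x = (\prod_l cc l ^+ h l) *: (S *m x).
Proof.
move=> Hx h; rewrite /hcovec -mulmxA.
have Tp : forall l k, T1 eta xi K (xi l) ^+ k *m x = cc l ^+ k *: x.
  move=> l; elim=> [|k IH]; first by rewrite expr0 mul1mx scale1r.
  by rewrite exprS -mulmxE -mulmxA IH -scalemxAr Hx scalerA -exprSr.
suff -> : forall s, foldr (fun l A => T1 eta xi K (xi l) ^+ h l *m A) 1%:M s *m x =
   (\prod_(l <- s) cc l ^+ h l) *: x by rewrite -scalemxAr big_enum.
elim=> [|l s IH] /=; first by rewrite mul1mx big_nil scale1r.
by rewrite -mulmxA IH -scalemxAr Tp big_cons scalerA mulrC.
Qed.

Lemma hcovec_tvec eta xi (K : 'M[C]_n) S (B : C -> 'M[C]_(Hdim n N)) lam v0 (h : cfg) :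
  (forall la, hcovec eta xi K S h *m B la = bfun eta xi h la *: hcovec eta xi K S h) ->
  hcovec eta xi K S h *m tvec B lam v0 =
  (\prod_(x <- lam) bfun eta xi h x) *: (hcovec eta xi K S h *m v0).
Proof.
move=> HB; elim: lam => [|x l IH] /=; first by rewrite big_nil scale1r.
by rewrite mulmxA HB -scalemxAl IH scalerA big_cons.
Qed.

Lemma hmatrix_mul eta xi (K : 'M[C]_n) S (x : 'cV[C]_(Hdim n N)) (h : cfg) :
  (hmatrix eta xi K S *m x) (enum_rank h) 0 = (hcovec eta xi K S h *m x) 0 0.
Proof. by rewrite !mxE; apply: eq_bigr => j _; rewrite mxE enum_rankK. Qed.

Lemma hmatrix_inj eta xi (K : 'M[C]_n) S (x y : 'cV[C]_(Hdim n N)) :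
  hmatrix eta xi K S \in unitmx ->
  (forall h, hcovec eta xi K S h *m x = hcovec eta xi K S h *m y) -> x = y.
Proof.
move=> U H.
have : hmatrix eta xi K S *m x = hmatrix eta xi K S *m y.
  by apply/matrixP => i j; rewrite ord1 -(enum_valK i) !hmatrix_mul H.
by move/(congr1 (mulmx (invmx (hmatrix eta xi K S)))); rewrite !mulKmx.
Qed.

Lemma Ral_mpf eta (xi : 'I_N -> C) l :
  mpf (fun la => Ral n eta l (la - xi l)).
Proof.
move=> i j; apply: (@pf_ext _ (fun la => (la - xi l) * (i == j)%:R + eta * Pal C n l i j)).
  apply: pf_add; last exact: pf_cst.
  by apply: pf_mul; [apply: pf_sub; [apply: pf_id|apply: pf_cst]|apply: pf_cst].
by move=> x; rewrite /Ral !mxE mulr_natr.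
Qed.

Lemma T1_mpf eta (xi : 'I_N -> C) (K : 'M[C]_n) : mpf (fun la => T1 eta xi K la).
Proof.
have HM : mpf (fun la => Mono eta xi K la).
  apply: mpf_mul; first exact: mpf_cst.
  elim: (rev (enum 'I_N)) => [|l s IH] /=; first exact: mpf_cst.
  by apply: mpf_mul => //; apply: Ral_mpf.
move=> i j; apply: (@pf_ext _ (fun la => \sum_(i0 : 'I_n)
   ent (Mono eta xi K la) (i0, enum_val i) (i0, enum_val j))).
  by apply: pf_sum => i0; apply: HM.
by move=> x; rewrite /T1 mxE.
Qed.

Lemma t1_pf eta (xi : 'I_N -> C) (K : 'M[C]_n) (t1 : C -> C) :
  (exists2 v : 'cV[C]_(Hdim n N), v != 0 &
     forall la : C, T1 eta xi K la *m v = t1 la *: v) -> pf t1.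
Proof.
move=> [v vn0 Hv].
have [i0 vi0] : exists i0, v i0 0 != 0.
  apply/existsP; apply: contraNT vn0; rewrite negb_exists => /forallP H.
  apply/eqP/matrixP => i j; rewrite ord1 mxE; exact/eqP/negPn/H.
apply: (@pf_ext _ (fun la => (T1 eta xi K la *m v) i0 0 * (v i0 0)^-1)).
  apply: pf_mul; last exact: pf_cst.
  apply: (@pf_ext _ (fun la => \sum_j T1 eta xi K la i0 j * v j 0)).
    by apply: pf_sum => j; apply: pf_mul; [apply: T1_mpf|apply: pf_cst].
  by move=> x; rewrite mxE.
by move=> x; rewrite Hv mxE mulfK.
Qed.

Lemma eta_neq0 eta (xi : 'I_N -> C) (K : 'M[C]_n) S :
  (1 < n)%N -> (0 < N)%N -> hmatrix eta xi K S \in unitmx -> eta != 0.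
Proof.
move=> n1 N0 U; apply/eqP => e0; subst eta.
have T0 : forall l, T1 0 xi K (xi l) = 0.
  move=> l; have F0 : forall s, l \in s ->
     foldr (fun k A => Ral n 0 k (xi l - xi k) *m A) 1%:M s = 0.
    elim=> [//|k s IH]; rewrite in_cons => /orP [/eqP <-|ls] /=.
      by rewrite /Ral subrr scale0r addr0 raddf0 mul0mx.
    by rewrite IH // mulmx0.
  apply/matrixP => i j; rewrite /T1 /Mono F0 ?mem_rev ?mem_enum // mulmx0 !mxE.
  by apply: big1 => i0 _; rewrite /ent mxE.
pose i1 : 'I_n := Ordinal n1.
pose h : cfg := [ffun _ => i1].
have H0 : hcovec 0 xi K S h = 0.
  rewrite /hcovec; have : Ordinal N0 \in enum 'I_N by rewrite mem_enum.
  case: (enum 'I_N) => [//|l s] _ /=.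
  by rewrite ffunE expr1 T0 mul0mx mulmx0.
pose y := invmx (hmatrix 0 xi K S) *m delta_mx (enum_rank h) (0 : 'I_1).
have := hmatrix_mul 0 xi K S y h; rewrite mulKVmx // H0 mul0mx !mxE !eqxx.
by move/eqP; rewrite oner_eq0.
Qed.

End Misc.

Section QSC.
Variables (C : numClosedFieldType) (n' N : nat).
Local Notation n := n'.+2.

Lemma tfun_pf eta (xi : 'I_N -> C) (K : 'M[C]_n) t1 m : pf t1 -> pf (tfun eta xi K t1 m).
Proof.
move=> Ht; case: m => [|m'] /=; first exact: pf_cst.
case: (m'.+1 == n).
  apply: pf_mul; first exact: pf_cst.
  apply: pf_prod => b; apply: pf_mul.
    by apply: pf_add; [apply: pf_sub; [apply: pf_id|apply: pf_cst]|apply: pf_cst].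
  apply: pf_prod => m; apply: pf_sub; [apply: pf_sub; [apply: pf_id|apply: pf_cst]|apply: pf_cst].
case: (m' == 0%N) => //.
apply: pf_mul.
  apply: pf_prod => b; apply: pf_prod => r.
  apply: pf_sub; [apply: pf_sub; [apply: pf_id|apply: pf_cst]|apply: pf_cst].
apply: pf_add.
  apply: pf_mul; first exact: pf_cst.
  by apply: pf_prod => b; apply: pf_sub; [apply: pf_id|apply: pf_cst].
apply: pf_sum => a; apply: pf_mul; last exact: pf_cst.
apply: pf_mul; last exact: pf_cst.
apply: pf_mul; last exact: pf_cst.
apply: pf_prod => b; apply: pf_mul; last exact: pf_cst.
by apply: pf_sub; [apply: pf_id|apply: pf_cst].
Qed.


Lemma QSC_ident eta (xi : 'I_N -> C) (K : 'M[C]_n) k1 t1 (lam : seq C) :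
  (forall a b : 'I_N, a != b ->
     xi a != xi b + eta /\ forall r : nat, (r < n)%N -> xi a != xi b - r%:R * eta) ->
  eta != 0 -> k1 != 0 -> pf t1 ->
  (forall la : C,
     \sum_(b < n.+1) alpha k1 eta xi b la *
        (\prod_(x <- lam) (la - b%:R * eta - x)) *
        tfun eta xi K t1 (n - b) (la - b%:R * eta) = 0) ->
  forall a, t1 (xi a) * \prod_(x <- lam) (xi a - x) =
            alpha1 k1 eta xi (xi a) * \prod_(x <- lam) (xi a - eta - x).
Proof.
move=> gen e0 k0 Ht QSC a.
pose phi y := \prod_(x <- lam) (y - x).
pose dd la := \prod_(c < N) (la + eta - xi c).
pose Gb (b : nat) la := match b with
  | 0 => - (phi la * (\det K * \prod_(c < N) \prod_(1 <= m < n) (la - xi c - m%:R * eta)))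
  | b'.+1 => (-1) ^+ b' * k1 * (\prod_(h < b') alpha1 k1 eta xi (la - (h.+1)%:R * eta)) *
       phi (la - b'.+1%:R * eta) * tfun eta xi K t1 (n - b'.+1) (la - b'.+1%:R * eta)
  end.
have Hterm : forall (b : nat) la, alpha k1 eta xi b la *
        (\prod_(x <- lam) (la - b%:R * eta - x)) *
        tfun eta xi K t1 (n - b) (la - b%:R * eta) = dd la * Gb b la.
  case=> [|b'] la.
    rewrite /= mul0r subr0 eqxx /qdet big_split /=.
    have -> : \prod_(c < N) (la - xi c + eta) = dd la.
      by apply: eq_bigr => c _; rewrite addrAC.
    rewrite -/(phi la); ring.
  rewrite /= big_ord_recl /= mul0r subr0.
  have -> : alpha1 k1 eta xi la = k1 * dd la by [].
  have Eb : forall i : nat, bump 0 i = i.+1 by move=> i; rewrite /bump leq0n add1n.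
  under eq_bigr do rewrite Eb.
  rewrite -/(phi _); ring.
have Hpd : forall x, dd x = (\prod_(c < N) ('X + (eta - xi c)%:P)).[x].
  move=> x; rewrite horner_prod; apply: eq_bigr => c _.
  by rewrite hornerD hornerX hornerC addrA.
have pd0 : \prod_(c < N) ('X + (eta - xi c)%:P) != 0 :> {poly C}.
  by apply: monic_neq0; apply: monic_prod => c _; apply: monicXaddC.
have Gpf : pf (fun la => \sum_(b < n.+1) Gb b la).
  apply: pf_sum => -[[|b'] _] /=.
    apply: pf_opp; apply: pf_mul.
      by apply: pf_prod => x; apply: pf_sub; [apply: pf_id|apply: pf_cst].
    apply: pf_mul; first exact: pf_cst.
    apply: pf_prod => c; apply: pf_prod => m.
    by apply: pf_sub; [apply: pf_sub; [apply: pf_id|apply: pf_cst]|apply: pf_cst].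
  apply: pf_mul; last by apply: pf_shift; apply: tfun_pf.
  apply: pf_mul; last first.
    by apply: pf_prod => x; apply: pf_sub; [apply: pf_sub; [apply: pf_id|apply: pf_cst]|apply: pf_cst].
  apply: pf_mul; first exact: pf_cst.
  apply: pf_prod => h; apply: pf_shift; apply: pf_mul; first exact: pf_cst.
  by apply: pf_prod => c; apply: pf_sub; [apply: pf_add; [apply: pf_id|apply: pf_cst]|apply: pf_cst].
have HG : forall x, \sum_(b < n.+1) Gb b x = 0.
  apply: (pf_cancel pd0 Hpd Gpf) => x.
  rewrite big_distrr -[X in _ = X](QSC x) /=; apply: eq_bigr => b _.
  by rewrite Hterm.
have := HG (xi a + n'.+1%:R * eta).
set l0 := xi a + n'.+1%:R * eta.
rewrite -(big_mkord xpredT (fun b => Gb b l0)) big_nat_recr //= big_nat_recr //=.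
rewrite big1_seq ?add0r; last first.
  move=> b /andP [_]; rewrite mem_index_iota => /andP [_ bn].
  case: b bn => [|b'] bn.
    rewrite /Gb.
    have -> : \prod_(c < N) \prod_(1 <= m < n) (l0 - xi c - m%:R * eta) = 0.
      rewrite (bigD1 a) //= big_nat_recr //=.
      have -> : l0 - xi a - n'.+1%:R * eta = 0 by rewrite /l0; ring.
      by rewrite !(mulr0, mul0r).
    by rewrite !mulr0 oppr0.
  rewrite /Gb.
  have E : (n - b'.+1 = (n' - b').+1)%N by lia.
  rewrite E /=.
  have -> : ((n' - b').+1 == n) = false by apply/negbTE/eqP; lia.
  have -> : (n' - b' == 0)%N = false by apply/negbTE/eqP; lia.
  have -> : \prod_(b < N) \prod_(1 <= r < (n' - b').+1)
       (l0 - b'.+1%:R * eta - xi b - r%:R * eta) = 0.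
    rewrite (bigD1 a) //= big_nat_recr //=; last by lia.
    have -> : l0 - b'.+1%:R * eta - xi a - (n' - b')%:R * eta = 0.
      rewrite natrB; last by lia.
      by rewrite /l0; ring.
    by rewrite !(mulr0, mul0r).
  by rewrite !(mulr0, mul0r).
rewrite /Gb.
have L1 : l0 - n'.+1%:R * eta = xi a by rewrite /l0 addrK.
have L2 : l0 - n'.+2%:R * eta = xi a - eta by rewrite /l0; ring.
have S1 : (n - n'.+1 = 1)%N by lia.
rewrite S1 L1 L2 subnn big_ord_recr /= L1.
set P := \prod_(i < n') _.
have Pn0 : P != 0.
  rewrite /P; apply/prodf_neq0 => h _; have hn := ltn_ord h; rewrite /alpha1 mulf_neq0 //.
  apply/prodf_neq0 => c _.
  have -> : l0 - h.+1%:R * eta + eta - xi c = xi a - (xi c - (n'.+1 - h)%:R * eta).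
    rewrite natrB; last by lia.
    by rewrite /l0; ring.
  rewrite subr_eq0; case: (eqVneq a c) => [<-|ac].
    rewrite -subr_eq0 opprB addrC subrK mulf_neq0 // pnatr_eq0; lia.
  by apply: (proj2 (gen a c ac)); lia.
have Cn0 : (-1) ^+ n' * k1 * P != 0.
  by rewrite !mulf_neq0 // expf_neq0 // oppr_eq0 oner_eq0.
move=> H.
have E2 : (-1) ^+ n' * k1 * P * (t1 (xi a) * phi (xi a) -
            alpha1 k1 eta xi (xi a) * phi (xi a - eta)) = 0.
  rewrite -[RHS]H exprS; ring.
move/eqP: E2; rewrite mulf_eq0 (negbTE Cn0) /= subr_eq0 => /eqP.
done.
Qed.

End QSC.

Lemma prod_subC (C : numClosedFieldType) (lam : seq C) y :
  \prod_(x <- lam) (x - y) = (-1) ^+ size lam * \prod_(x <- lam) (y - x).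
Proof.
elim: lam => [|x l IH]; first by rewrite !big_nil expr0 mulr1.
by rewrite !big_cons IH /= exprS; ring.
Qed.

Theorem mainTheorem6 (C : numClosedFieldType) (n N : nat) (eta : C) (xi : 'I_N -> C)
  (K W KJ : 'M[C]_n) (k1 : C) (S : 'rV[C]_(Hdim n N))
  (B : C -> 'M[C]_(Hdim n N)) (t1 : C -> C) (lam : seq C) :
  (1 < n)%N -> (0 < N)%N ->
  (* generic inhomogeneities *)
  (forall a b : 'I_N, a != b ->
     xi a != xi b + eta /\ forall r : nat, (r < n)%N -> xi a != xi b - r%:R * eta) ->
  (* K is w-simple, K = W_K K_J W_K^{-1}, K_J e_1 = k_1 e_1, k_1 != 0 *)
  wsimple K ->
  W \in unitmx -> jordan_form KJ -> K = W *m KJ *m invmx W ->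
  KJ *m e1 C n = k1 *: e1 C n -> k1 != 0 ->
  (* the covectors <h_1..h_N| form a basis of the dual of H *)
  hmatrix eta xi K S \in unitmx ->
  (* B^{(K)}(lambda) is diagonal in that basis with eigenvalues b_h(lambda) *)
  (forall (la : C) (h : cfg n N),
     hcovec eta xi K S h *m B la = bfun eta xi h la *: hcovec eta xi K S h) ->
  (* t_1 is an eigenvalue of T_1^{(K)} *)
  (exists2 v : 'cV[C]_(Hdim n N), v != 0 &
     forall la : C, T1 eta xi K la *m v = t1 la *: v) ->
  (* phi_t(lambda) = prod_a (lambda - lambda_a), M <= N, lambda_a != xi_b *)
  (size lam <= N)%N ->
  (forall x, x \in lam -> forall b : 'I_N, x != xi b) ->
  (* quantum spectral curve with abar = k1 *)
  (forall la : C,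
     \sum_(b < n.+1) alpha k1 eta xi b la *
        (\prod_(x <- lam) (la - b%:R * eta - x)) *
        tfun eta xi K t1 (n - b) (la - b%:R * eta) = 0) ->
  let tv := tvec B lam (@t0vec C n N W) in
  [/\ tv != 0,
      forall la : C, T1 eta xi K la *m tv = t1 la *: tv &
      forall v : 'cV[C]_(Hdim n N),
        (forall la : C, T1 eta xi K la *m v = t1 la *: v) ->
        exists c : C, v = c *: tv].
Proof.
destruct n as [|[|n']]; [by []|by []|].
move=> hn N0 gen _ Wu _ HK KJe k0 Hu HB Heig _ lxi QSC tv.
have e0 := eta_neq0 hn N0 Hu.
have t1pf := t1_pf Heig.
have Hid := QSC_ident gen e0 k0 t1pf QSC.
pose w := W *m e1 C n'.+2.
have Kw : K *m w = k1 *: w.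
  rewrite /w HK -mulmxA (mulmxA (invmx W)) mulVmx // mul1mx -mulmxA KJe.
  by rewrite scalemxAr.
have Et0 : t0vec N W = tenvec N w by rewrite /t0vec tenop_tenvec.
have Ht0 : forall l, T1 eta xi K (xi l) *m t0vec N W =
                     alpha1 k1 eta xi (xi l) *: t0vec N W.
  by move=> l; rewrite Et0; apply: T1_tenvec.
pose P l := \prod_(x <- lam) (x - xi l).
pose Z := \prod_l P l ^+ n'.+1.
have Hsc : forall h : cfg n'.+2 N,
   (\prod_(x <- lam) bfun eta xi h x) * \prod_l alpha1 k1 eta xi (xi l) ^+ h l =
   Z * \prod_l t1 (xi l) ^+ h l.
  move=> h; rewrite /bfun exchange_big /= -big_split /Z -big_split /=.
  apply: eq_bigr => l _; rewrite big_split /= !prodrXl.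
  have HQ : (\prod_(x <- lam) (x - xi l + eta)) * alpha1 k1 eta xi (xi l) =
            t1 (xi l) * P l.
    rewrite /P prod_subC.
    have -> : \prod_(x <- lam) (x - xi l + eta) = \prod_(x <- lam) (x - (xi l - eta)).
      by apply: eq_bigr => x _; ring.
    by rewrite prod_subC [RHS]mulrCA Hid; ring.
  rewrite -mulrA -exprMn HQ exprMn -/(P l) [t1 _ ^+ _ * _]mulrC mulrA -exprD.
  by rewrite subnK //; have := ltn_ord (h l); lia.
have Htv : forall h, hcovec eta xi K S h *m tv =
    (Z * \prod_l t1 (xi l) ^+ h l) *: (S *m t0vec N W).
  move=> h; rewrite /tv (hcovec_tvec _ _ (fun la => HB la h)).
  by rewrite (hcovec_eig _ Ht0) scalerA Hsc.
pose s0 := (S *m t0vec N W) 0 0.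
have wn0 : w != 0.
  apply: contraTneq isT => w0.
  have : e1 C n'.+2 = 0 by rewrite -(mulKmx Wu (e1 C n'.+2)) -/w w0 mulmx0.
  by move/matrixP => /(_ ord0 ord0); rewrite !mxE /= => /eqP; rewrite oner_eq0.
have s0n0 : s0 != 0.
  apply/eqP => s00.
  have : t0vec N W = 0.
    apply: (hmatrix_inj Hu) => h; rewrite mulmx0 (hcovec_eig _ Ht0).
    apply/matrixP => i j; rewrite !ord1 [LHS]mxE.
    by rewrite -/s0 s00 mulr0 mxE.
  rewrite Et0 => /matrixP.
  have [i wi] : exists i, w i 0 != 0.
    apply/existsP; apply: contraNT wn0; rewrite negb_exists => /forallP H.
    apply/eqP/matrixP => i j; rewrite ord1 [RHS]mxE; exact/eqP/negPn/H.
  move=> /(_ (enum_rank ([ffun _ => i] : cfg n'.+2 N)) 0).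
  rewrite /tenvec mkvec_rank mxE => /eqP; apply/negP.
  by apply/prodf_neq0 => l _; rewrite ffunE.
have Zn0 : Z != 0.
  apply/prodf_neq0 => l _; apply: expf_neq0.
  rewrite /P prodf_seq_neq0; apply/allP => x xl; rewrite subr_eq0.
  exact: lxi.
have C3 : forall v : 'cV[C]_(Hdim n'.+2 N),
    (forall la : C, T1 eta xi K la *m v = t1 la *: v) ->
    v = ((S *m v) 0 0 / (Z * s0)) *: tv.
  move=> v Hv; apply: (hmatrix_inj Hu) => h.
  rewrite -scalemxAr Htv (hcovec_eig _ (fun l => Hv (xi l))).
  rewrite scalerA; apply/matrixP => i j; rewrite !ord1 [LHS]mxE [RHS]mxE -/s0.
  by field; rewrite s0n0 Zn0.
have tvn0 : tv != 0.
  apply/eqP => tv0.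
  have := Htv [ffun _ => Ordinal (ltnW hn)].
  rewrite tv0 mulmx0 => /matrixP /(_ 0 0).
  rewrite [X in _ = X]mxE [X in X = _]mxE -/s0.
  under eq_bigr do rewrite ffunE expr0.
  rewrite big1_eq mulr1 => /eqP; rewrite eq_sym !mulf_eq0 (negbTE Zn0) (negbTE s0n0).
  done.
split=> //; last by move=> v Hv; eexists; apply: C3.
move: Heig => [v0 v0n0 Hv0] la.
have E := C3 v0 Hv0.
set c := (S *m v0) 0 0 / (Z * s0) in E.
have cn0 : c != 0 by apply: contraNneq v0n0 => c0; rewrite E c0 scale0r.
have -> : tv = c^-1 *: v0 by rewrite E scalerA mulVf // scale1r.
by rewrite -scalemxAr Hv0 !scalerA mulrC.
Qed.
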